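(* Let $\Omega\subset\mathbb{R}^N$ ($N\ge2$) be a bounded smooth domain, $1<q<2$, $b\in C^\alpha(\overline\Omega)$ with $\Omega^b_+\neq\emptyset$ and $\int_\Omega b\le0$. For $\epsilon>0$ small (so that $\{b>\epsilon\}\neq\emptyset$), let $\lambda_\epsilon>0$ be the positive principal eigenvalue of $-\Delta\varphi=\lambda(b-\epsilon)\epsilon^{q-2}\varphi$ in $\Omega$, $\frac{\partial\varphi}{\partial\mathbf{n}}=0$ on $\partial\Omega$. Then $\lim_{\epsilon\to0^+}\lambda_\epsilon=0$.
   Context: $\Omega^b_+=\{x\in\Omega:b(x)>0\}$. A principal eigenvalue is one having a positive eigenfunction; for such $\epsilon$ the problem has exactly two principal eigenvalues, $0$ and $\lambda_\epsilon>0$. *)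

(* Defs.v *)
From HB Require Import structures.
From mathcomp Require Import all_boot all_order all_algebra.
From mathcomp Require Import all_classical all_reals all_analysis.
Set Implicit Arguments.
Unset Strict Implicit.
Unset Printing Implicit Defensive.
Import Order.TTheory GRing.Theory Num.Theory.
Import numFieldNormedType.Exports.
Local Open Scope classical_set_scope.
Local Open Scope ring_scope.

Definition partial {R : realType} {N : nat} (f : 'rV[R]_N -> R) (i : 'I_N)
  : 'rV[R]_N -> R := fun x => derive f x (delta_mx 0 i).

Definition laplacian {R : realType} {N : nat} (f : 'rV[R]_N -> R)
  : 'rV[R]_N -> R := fun x => \sum_(i < N) partial (partial f i) i x.

Fixpoint itpartial {R : realType} {N : nat} (f : 'rV[R]_N -> R) (s : seq 'I_N)
  : 'rV[R]_N -> R :=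
  match s with
  | [::] => f
  | i :: s' => partial (itpartial f s') i
  end.

Definition smooth {R : realType} {N : nat} (f : 'rV[R]_N -> R) : Prop :=
  forall (s : seq 'I_N) (x : 'rV[R]_N), differentiable (itpartial f s) x.

Definition dom_of {R : realType} {N : nat} (rho : 'rV[R]_N -> R) : set 'rV[R]_N :=
  [set x | rho x < 0].

(* Omega is a bounded smooth domain (open, connected, bounded) with
   boundary {rho = 0}, on which grad rho does not vanish. *)
Definition smooth_bounded_domain {R : realType} {N : nat}
  (rho : 'rV[R]_N -> R) : Prop :=
  [/\ smooth rho,
      (forall x, rho x = 0 -> exists i, partial rho i x != 0),
      bounded_set (dom_of rho) &
      connected (dom_of rho)].

Definition holder_on {R : realType} {N : nat} (alpha : R) (A : set 'rV[R]_N)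
  (b : 'rV[R]_N -> R) : Prop :=
  exists C : R, forall x y, A x -> A y -> `|b x - b y| <= C * (`|x - y| `^ alpha).

Definition setcoord {R : realType} {N : nat} (x : 'rV[R]_N) (k : nat) (t : R)
  : 'rV[R]_N := \row_j (if nat_of_ord j == k then t else x 0 j).

Fixpoint iter_int {R : realType} {N : nat} (k : nat) (f : 'rV[R]_N -> R)
  : 'rV[R]_N -> R :=
  match k with
  | 0 => f
  | k'.+1 => fun x =>
      Rintegral (@lebesgue_measure R) setT (fun t => iter_int k' f (setcoord x k' t))
  end.

(* Lebesgue integral over A of f in R^N, computed as an iterated integral
   (Fubini) of the zero extension of f outside A. *)
Definition integral_over {R : realType} {N : nat} (A : set 'rV[R]_N)
  (f : 'rV[R]_N -> R) : R :=
  iter_int N (fun x => if `[< A x >] then f x else 0) 0.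

(* lam is a principal eigenvalue of
     - Lap phi = lam (b - eps) eps^(q-2) phi in Omega,  d phi / dn = 0 on dOmega,
   i.e. there is a classical eigenfunction phi in C^2(Omega) cap C^1(closure Omega)
   that is positive in Omega. The outward normal is grad rho / |grad rho|, so
   the Neumann condition reads  grad phi . grad rho = 0  on {rho = 0}. *)
Definition neumann_principal_eigenvalue {R : realType} {N : nat}
  (rho : 'rV[R]_N -> R) (b : 'rV[R]_N -> R) (q eps lam : R) : Prop :=
  let Om := dom_of rho in
  exists phi : 'rV[R]_N -> R,
    [/\
        (forall x, Om x -> differentiable phi x /\
           forall i, differentiable (partial phi i) x /\
             forall j, {for x, continuous (partial (partial phi i) j)}),
        (* C^1 up to the boundary: phi and its gradient extend continuously *)
        {within closure Om, continuous phi},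
        (exists G : 'I_N -> 'rV[R]_N -> R,
           (forall i, {within closure Om, continuous (G i)}) /\
           (forall i x, Om x -> G i x = partial phi i x) /\
           (forall x, closure Om x -> rho x = 0 ->
              \sum_(i < N) G i x * partial rho i x = 0)),
        (forall x, Om x -> 0 < phi x) &
        (forall x, Om x ->
           - laplacian phi x = lam * (b x - eps) * (eps `^ (q - 2)) * phi x)].

(* Main.v *)
Require Import Defs.
From HB Require Import structures.
From mathcomp Require Import all_boot all_order all_algebra.
From mathcomp Require Import all_classical all_reals all_analysis.
From mathcomp Require Import ring lra.
Import Order.TTheory GRing.Theory Num.Theory.
Import numFieldNormedType.Exports.
Local Open Scope classical_set_scope.
Local Open Scope ring_scope.

Section S.
Variable R : realType.


Lemma dir_is_derive (V : normedModType R) (F : V -> R) (a e : V) (t0 : R) :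
  derivable F (a + t0 *: e) e ->
  is_derive t0 1 (fun t => F (a + t *: e)) ('D_e F (a + t0 *: e)).
Proof.
move=> dF.
have E : (fun h : R => h^-1 *: (((fun t => F (a + t *: e)) \o shift t0) (h *: 1) - F (a + t0 *: e)))
   = (fun h => h^-1 *: ((F \o shift (a + t0 *: e)) (h *: e) - F (a + t0 *: e))).
  apply/funext => h /=; congr (_ *: (F _ - _)).
  by rewrite [h *: 1]mulr1 scalerDl addrCA !addrA.
split; first by rewrite /derivable E.
by rewrite /derive E.
Qed.

Lemma second_max (g g1 : R -> R) (eta d : R) : 0 < eta ->
  (forall t : R, `|t| < eta -> g t <= g 0) ->
  (forall t : R, `|t| < eta -> is_derive t 1 g (g1 t)) ->
  is_derive (0:R) 1 g1 d -> d <= 0.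
Proof.
move=> eta0 gmax gd g1d.
have hin : forall t : R, t \in `](- eta), eta[ -> `|t| < eta.
  by move=> t; rewrite in_itv /= ltr_norml => /andP[-> ->].
have H0 : (0:R) \in `](- eta), eta[ by rewrite in_itv /= eta0 oppr_lt0 eta0.
have g10 : g1 0 = 0.
  have leab : - eta <= eta by rewrite -subr_ge0 opprK ltW // addr_gt0.
  have := @derive1_at_max R g (- eta) eta 0 leab _ H0.
  move=> /(_ (fun t tin => @ex_derive _ _ _ _ _ _ _ (gd t (hin t tin)))).
  move=> /(_ (fun t tin => gmax t (hin t tin))) [_ D0].
  have [_ D1] := gd 0 (hin _ H0).
  by rewrite -D1 D0.
rewrite leNgt; apply/negP => d0.
have [dg1 dv] := g1d.
have dg1' : (fun h : R => h^-1 *: ((g1 \o shift 0) (h *: 1) - g1 0)) @ 0^' --> d.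
  by rewrite -dv; exact: dg1.
have := @cvgr_gt _ _ _ _ _ _ dg1' (d / 2).
rewrite ltr_pdivrMr // ltr_pMr // ltr1n => H; have [e e0 He] := H _ isT.
have {}e0 : 0 < e := e0.
pose t := Num.min e eta / 2.
have t0 : 0 < t by rewrite divr_gt0 // lt_min e0 eta0.
have m1 : Num.min e eta <= e by rewrite ge_min lexx.
have m2 : Num.min e eta <= eta by rewrite ge_min lexx orbT.
have te : t < e by rewrite /t; lra.
have teta : t < eta by rewrite /t; lra.
have tin : forall x, x \in `[0, t] -> `|x| < eta.
  move=> x; rewrite in_itv /= => /andP[x0 xt].
  by rewrite ger0_norm // (le_lt_trans xt).
have [c cin gc] := @MVT R g g1 0 t t0 (fun x xin => gd x (tin x (subset_itv_oo_cc xin))) 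
  (derivable_within_continuous (fun x xin => @ex_derive _ _ _ _ _ _ _ (gd x (tin x xin)))).
have c0 : 0 < c by rewrite (itvP cin).
have ct : c < t by rewrite (itvP cin).
have := He c; rewrite /= sub0r normrN gtr0_norm // => /(_ (lt_trans ct te) (lt0r_neq0 c0)).
rewrite /= g10 subr0 addr0 [c *: 1]mulr1 => hc.
have g1c : 0 < g1 c.
  have : 0 < c^-1 * g1 c by apply: lt_trans hc; rewrite divr_gt0.
  by rewrite pmulr_rgt0 // invr_gt0.
have := gmax t; rewrite gtr0_norm // => /(_ teta).
have : 0 < g1 c * (t - 0) by rewrite subr0 mulr_gt0.
rewrite -gc; lra.
Qed.


Lemma D_scal (f : R -> R) (y w : R) : differentiable f y ->
  'D_w f y = w * 'D_1 f y.
Proof.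
move=> df; rewrite !deriveE //.
have -> : w = w *: (1:R) by apply/esym; exact: mulr1.
by rewrite linearZ /= mulr_algl.
Qed.

Lemma cos_dir (A w t : R) :
  is_derive t 1 (fun s : R => cos (A + s *: w)) (w * - sin (A + t *: w)).
Proof.
have dc : forall y : R, differentiable (@cos R) y.
  by move=> y; apply/derivable1_diffP; exact: ex_derive.
have := @dir_is_derive R^o cos A w t (diff_derivable (v:=w) (dc _)).
by rewrite D_scal // derive_val.
Qed.

Lemma sin_dir (A w t : R) :
  is_derive t 1 (fun s : R => sin (A + s *: w)) (w * cos (A + t *: w)).
Proof.
have dc : forall y : R, differentiable (@sin R) y.
  by move=> y; apply/derivable1_diffP; exact: ex_derive.
have := @dir_is_derive R^o sin A w t (diff_derivable (v:=w) (dc _)).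
by rewrite D_scal // derive_val.
Qed.

Lemma rv_shift N (xs : 'rV[R]_N) i t j :
  (xs + t *: delta_mx 0 i) 0 j = xs 0 j + (if j == i then t else 0).
Proof. by rewrite !mxE eqxx /=; case: eqP => _; rewrite ?mulr1 ?mulr0. Qed.

End S.

Section S3.
Variable R : realType.

Lemma key N (x0 : 'rV[R]_N) (r : R) (phi K : 'rV[R]_N -> R) :
  0 < r ->
  (forall x : 'rV[R]_N, (forall i, `|x 0 i - x0 0 i| <= r) ->
     [/\ differentiable phi x, (forall i, differentiable (partial phi i) x),
         0 < phi x & - laplacian phi x = K x * phi x]) ->
  exists2 x : 'rV[R]_N, (forall i, `|x 0 i - x0 0 i| <= r) &
     K x <= N%:R * (pi / (2 * r)) ^+ 2.
Proof.
move=> r0 Hphi.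
set w := pi / (2 * r).
have w0 : 0 < w by rewrite divr_gt0 ?pi_gt0 // mulr_gt0.
have wr : w * r = pi / 2 by rewrite /w; field; rewrite lt0r_neq0.
pose Q := [set v : 'rV[R]_N | forall i, `[x0 0 i - r, x0 0 i + r]%classic (v 0 i)].
have QE : forall v, Q v <-> (forall i, `|v 0 i - x0 0 i| <= r).
  move=> v; split => H i; have := H i; rewrite /= in_itv /= ler_distl //.
pose c (i : 'I_N) (s : R) := cos (w * (s - x0 0 i)).
pose psi (v : 'rV[R]_N) := \prod_(i < N) c i (v 0 i).
pose F (v : 'rV[R]_N) := psi v / phi v.
have Qne : Q !=set0.
  by exists x0; apply/QE => i; rewrite subrr normr0 ltW.
have Qc : compact Q.
  have H := (@rV_compact _ _ (fun i => `[x0 0 i - r, x0 0 i + r]%classic)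
           (fun i => @segment_compact R _ _)).
  exact H.
have psic : continuous psi.
  apply: continuous_big => //; first exact: mul_continuous.
  move=> i _ v.
  apply: (@continuous_comp _ _ _ (fun v : 'rV[R]_N => w * (v 0 i - x0 0 i)) cos).
    apply: continuousM; first exact: cst_continuous.
    apply: continuousB; first exact: coord_continuous.
    exact: cst_continuous.
  exact: continuous_cos.
have Fc : {within Q, continuous F}.
  apply: continuous_in_subspaceT => x; rewrite inE => /QE Qx.
  have [dphi _ phi0 _] := Hphi x Qx.
  apply: continuousM; first exact: psic.
  apply: continuousV; first exact: lt0r_neq0.
  exact: differentiable_continuous.
have [xs Qxs Fmax] := EVT_max_rV Qne Qc Fc.
have {}Qxs : Q xs by move: Qxs; rewrite inE.
have {}Fmax : forall t, Q t -> F t <= F xs by move=> t Qt; apply: Fmax; rewrite inE.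
set v := F xs.
have Qx0 : Q x0 by apply/QE => i; rewrite subrr normr0 ltW.
have [_ _ phix0 _] := Hphi x0 (proj1 (QE x0) Qx0).
have psix0 : psi x0 = 1.
  by rewrite /psi big1 // => i _; rewrite /c subrr mulr0 cos0.
have v0 : 0 < v.
  apply: lt_le_trans (Fmax x0 Qx0).
  by rewrite /F psix0 mul1r invr_gt0.
have [dphi dphi2 phixs lap] := Hphi xs (proj1 (QE xs) Qxs).
have psixs : psi xs = v * phi xs by rewrite /v /F divfK // lt0r_neq0.
have psixs0 : 0 < psi xs by rewrite psixs mulr_gt0.
have strict : forall i, `|xs 0 i - x0 0 i| < r.
  move=> i; rewrite lt_neqAle (proj1 (QE xs) Qxs i) andbT; apply/eqP => Er.
  have : psi xs != 0 by rewrite lt0r_neq0.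
  rewrite /psi (bigD1 i) //= mulf_eq0 negb_or => /andP[/negP []].
  rewrite /c; apply/eqP.
  have [ge0|lt0] := leP 0 (xs 0 i - x0 0 i).
    by move: Er; rewrite ger0_norm // => ->; rewrite wr cos_pihalf.
  move: Er; rewrite ltr0_norm // => Er.
  have -> : xs 0 i - x0 0 i = - r by rewrite -Er opprK.
  by rewrite mulrN wr cosN cos_pihalf.
have coord : forall i, - (w ^+ 2) * psi xs <= v * partial (partial phi i) i xs.
  move=> i.
  set e := delta_mx 0 i : 'rV[R]_N.
  set a := xs 0 i - x0 0 i.
  set P := \prod_(j < N | j != i) c j (xs 0 j).
  have psi_shift : forall t, psi (xs + t *: e) = P * cos (w * a + t *: w).
    move=> t; rewrite /psi (bigD1 i) //= mulrC; congr (_ * _).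
      apply: eq_bigr => j /negbTE ji; rewrite /e rv_shift ji addr0 //.
    rewrite /e rv_shift eqxx /c /a; congr cos.
    have -> : t *: w = t * w by []. ring.
  set eta := r - `|a|.
  have eta0 : 0 < eta by rewrite subr_gt0 strict.
  have inQ : forall t, `|t| < eta -> Q (xs + t *: e).
    move=> t tlt; apply/QE => j; rewrite /e rv_shift.
    case: eqP => [-> | _]; last by rewrite addr0 (proj1 (QE xs) Qxs).
    rewrite addrAC -/a; apply: (le_trans (ler_normD _ _)).
    by move: tlt; rewrite /eta; lra.
  pose G1 := fun s : R => cos (w * a + s *: w).
  pose G2 := fun s : R => phi (xs + s *: e).
  pose g := P \*: G1 - v \*: G2.
  pose g1 := fun s : R => P * (w * - sin (w * a + s *: w)) - v * partial phi i (xs + s *: e).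
  have gE : forall s, g s = P * G1 s - v * G2 s by [].
  have gmax : forall t : R, `|t| < eta -> g t <= g 0.
    move=> t tlt.
    have -> : g 0 = 0.
      rewrite gE /G1 /G2 !scale0r !addr0.
      have := psi_shift 0; rewrite !scale0r !addr0 => <-.
      by rewrite psixs subrr.
    rewrite gE /G1 /G2 -psi_shift subr_le0.
    have [_ _ pp _] := Hphi _ (proj1 (QE _) (inQ t tlt)).
    by rewrite -ler_pdivrMr //; apply: Fmax; apply: inQ.
  have gd : forall t : R, `|t| < eta -> is_derive t 1 g (g1 t).
    move=> t tlt.
    have [dp _ _ _] := Hphi _ (proj1 (QE _) (inQ t tlt)).
    apply: is_deriveB; apply: is_deriveZ; first exact: cos_dir.
    exact: dir_is_derive (diff_derivable dp).
  pose G3 := fun s : R => sin (w * a + s *: w).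
  pose G4 := fun s : R => partial phi i (xs + s *: e).
  have g1E : g1 = (P * w) \*: (- G3) - v \*: G4.
    by apply: funext => s; rewrite /g1 mulrA.
  have g1d : is_derive (0:R) 1 g1 ((P * w) *: (- (w * cos (w * a + 0 *: w)))
             - v *: 'D_e (partial phi i) (xs + 0 *: e)).
    rewrite g1E; apply: is_deriveB; apply: is_deriveZ.
      by apply: is_deriveN; exact: sin_dir.
    apply: dir_is_derive; rewrite scale0r addr0; apply: diff_derivable; exact: dphi2.
  have := @second_max R _ _ _ _ eta0 gmax gd g1d.
  rewrite !scale0r !addr0 subr_le0.
  have -> : (P * w) *: - (w * cos (w * a)) = - (w ^+ 2) * (P * cos (w * a)).
    have -> : forall x y : R, x *: y = x * y by []. ring.
  by have := psi_shift 0; rewrite !scale0r !addr0 => <-.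
exists xs; first exact: (proj1 (QE xs) Qxs).
have S : \sum_(i < N) (- (w ^+ 2) * psi xs) <= \sum_(i < N) v * partial (partial phi i) i xs.
  by apply: ler_sum => i _; exact: coord.
rewrite sumr_const card_ord -mulr_sumr -/(laplacian phi xs) in S.
have lap' : laplacian phi xs = - (K xs * phi xs) by rewrite -lap opprK.
rewrite lap' -mulr_natr in S.
rewrite -(ler_pM2r psixs0) -subr_ge0.
have -> : N%:R * w ^+ 2 * psi xs - K xs * psi xs
   = v * - (K xs * phi xs) - - w ^+ 2 * psi xs * N%:R by rewrite psixs; ring.
by rewrite subr_ge0.
Qed.
End S3.

Section S4.
Variable R : realType.

Lemma rv_norm_le N (y : 'rV[R]_N) (r : R) : 0 <= r ->
  (forall i, `|y 0 i| <= r) -> `|y| <= r.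
Proof.
move=> r0 H.
have -> : `|y| = mx_norm y by [].
rewrite mx_normrE.
apply: (big_ind (fun x => x <= r)) => //.
  by move=> a c ha hc; rewrite ge_max ha hc.
by move=> [i j] _; rewrite /= (ord1 i); exact: H.
Qed.

Lemma open_dom N (rho : 'rV[R]_N -> R) (x : 'rV[R]_N) :
  smooth rho -> rho x < 0 -> exists2 r1 : R, 0 < r1 & forall y, `|x - y| < r1 -> rho y < 0.
Proof.
move=> sm rx.
have cr : {for x, continuous rho}.
  exact: differentiable_continuous (sm [::] x).
have := cvgr_lt _ cr _ rx.
move=> H0; have := (proj1 (nbhs_ballP _ _) (H0 _)). case=> r1 r10 H; exists r1 => // y xy; apply: H.
by rewrite -ball_normE /=.
Qed.
End S4.

Theorem lemma6p6 (R : realType) (N : nat) (rho : 'rV[R]_N -> R)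
  (q alpha : R) (b : 'rV[R]_N -> R) (lam : R -> R) :
  (2 <= N)%N ->
  smooth_bounded_domain rho ->
  1 < q -> q < 2 ->
  0 < alpha -> alpha < 1 ->
  holder_on alpha (closure (dom_of rho)) b ->
  (exists x, dom_of rho x /\ 0 < b x) ->
  integral_over (dom_of rho) b <= 0 ->
  (exists e0 : R, 0 < e0 /\ forall eps, 0 < eps -> eps < e0 ->
       (exists x, dom_of rho x /\ eps < b x) /\
       0 < lam eps /\ neumann_principal_eigenvalue rho b q eps (lam eps)) ->
  lam eps @[eps --> 0^'+] --> 0.
Proof.
move=> _ [sm _ _ _] q1 q2 a0 _ [C HC] [x1 [Om1 bx1]] _ [e0 [e00 He]].
set delta := b x1 / 2.
have d0 : 0 < delta by rewrite divr_gt0.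
have [r1 r10 Hr1] := @open_dom R _ _ _ sm Om1.
have [r [[r0 rr1] rp]] : exists r : R, (0 < r /\ r < r1) /\ r `^ alpha < delta / (`|C| + 1).
  apply: (@filter_ex _ (0:R)^'+ _).
  have dC : 0 < delta / (`|C| + 1) by rewrite divr_gt0 // ltr_wpDl.
  near=> s; split; [split|].
  - by near: s; exact: nbhs_right_gt.
  - by near: s; exact: nbhs_right_lt.
  - near: s; have := cvgr_lt _ (powR_cvg0 a0) _ dC; apply; exact: _.
have inOm : forall y : 'rV[R]_N, (forall i, `|y 0 i - x1 0 i| <= r) -> dom_of rho y.
  move=> y Hy; apply: Hr1; rewrite distrC.
  apply: le_lt_trans rr1; apply: rv_norm_le; first exact: ltW.
  by move=> i; rewrite !mxE; exact: Hy.
have bdel : forall y : 'rV[R]_N, (forall i, `|y 0 i - x1 0 i| <= r) -> delta <= b y.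
  move=> y Hy.
  have Hyr : `|y - x1| <= r.
    apply: rv_norm_le; first exact: ltW.
    by move=> i; rewrite !mxE; exact: Hy.
  have := HC y x1 (subset_closure (inOm y Hy)) (subset_closure Om1).
  have p1 : `|y - x1| `^ alpha <= r `^ alpha.
    by apply: ge0_ler_powR => //; [exact: ltW | rewrite nnegrE | rewrite nnegrE ltW].
  have p2 : C * `|y - x1| `^ alpha <= `|C| * (delta / (`|C| + 1)).
    apply: (le_trans (ler_wpM2r (powR_ge0 _ _) (ler_norm C))).
    by apply: ler_wpM2l => //; apply: ltW; apply: le_lt_trans rp.
  have p3 : `|C| * (delta / (`|C| + 1)) <= delta.
    have C1 : 0 < `|C| + 1 by apply: ltr_wpDl.
    rewrite mulrCA ger_pMr // ler_pdivrMr // mul1r; lra.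
  have bx1E : b x1 = 2 * delta by rewrite /delta; field.
  move=> H; have := le_trans H (le_trans p2 p3).
  rewrite ler_norml bx1E => /andP[h1 _]; lra.
set M := N%:R * (pi / (2 * r)) ^+ 2.
have bound : forall eps, 0 < eps -> eps < e0 -> eps < delta / 2 ->
    0 < lam eps <= (2 * M / delta) * eps `^ (2 - q).
  move=> eps ep0 epe0 epd.
  have [_ [lam0 [phi [C2 _ _ pos eqn]]]] := He eps ep0 epe0.
  have [xs Qxs Kxs] := @key R N x1 r phi (fun x => lam eps * (b x - eps) * eps `^ (q - 2)) r0
    (fun x Qx => let Omx := inOm x Qx in
       let: conj d1 d2 := C2 x Omx in
       And4 d1 (fun i => proj1 (d2 i)) (pos x Omx) (eqn x Omx)).
  rewrite lam0 /=.
  have p0 : 0 < eps `^ (q - 2) by rewrite powR_gt0.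
  have bxs := bdel xs Qxs.
  have H1 : lam eps * (delta / 2) * eps `^ (q - 2) <= M.
    apply: le_trans Kxs; rewrite ler_pM2r // ler_pM2l //; lra.
  have -> : 2 - q = - (q - 2) by rewrite opprB.
  rewrite powRN.
  have -> : 2 * M / delta * (eps `^ (q - 2))^-1 = M / (delta / 2 * eps `^ (q - 2)).
    by field; rewrite !lt0r_neq0.
  by rewrite ler_pdivlMr ?mulr_gt0 // mulrA.
have q20 : 0 < 2 - q by rewrite subr_gt0.
apply: (@squeeze_cvgr _ _ _ R (fun=> 0) (fun eps => (2 * M / delta) * eps `^ (2 - q))).
- have d2 : 0 < delta / 2 by rewrite divr_gt0.
  near=> eps.
  have /andP[h1 h2] : 0 < lam eps <= (2 * M / delta) * eps `^ (2 - q).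
    apply: bound.
    - by near: eps; exact: nbhs_right_gt.
    - by near: eps; exact: (nbhs_right_lt e00).
    - by near: eps; exact: (nbhs_right_lt d2).
  by rewrite ltW.
- exact: cvg_cst.
- have := cvgM (cvg_cst (2 * M / delta)) (powR_cvg0 q20).
  by rewrite mulr0; apply; exact: _.
Unshelve. all: by end_near.
Qed.
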